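(* Let $t,u$ be indeterminates. For every integer $n\ge1$, $$\sum_{|\lambda|=n} t^{2n(\lambda)-2\binom{\ell(\lambda)}{2}}\,\frac{(t;t)_{\ell(\lambda)-1}\,(u^{-1};t)_{\ell(\lambda)}}{\prod_{i\ge1}(t;t)_{m_i(\lambda)}}\,u^{\ell(\lambda)}=\frac{u^n-1}{1-t^n},$$ the sum being over all partitions $\lambda$ of $n$.
   Context: For a partition $\lambda$: $|\lambda|=\sum_i\lambda_i$, $\ell(\lambda)$ is the number of nonzero parts, $n(\lambda)=\sum_{i\ge1}(i-1)\lambda_i$, and $m_j(\lambda)=\#\{i:\lambda_i=j\}$. $(x;t)_m=\prod_{i=1}^m(1-xt^{i-1})$ with $(x;t)_0=1$. *)

(* Defs.v *)
From HB Require Import structures.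
From mathcomp Require Import all_boot all_order all_algebra.
Set Implicit Arguments. Unset Strict Implicit. Unset Printing Implicit Defensive.
Import GRing.Theory.
Local Open Scope ring_scope.

Definition is_partition (s : seq nat) : bool :=
  sorted geq s && all (fun x => 0 < x)%N s.

(* The partitions of n, enumerated as the zero-stripped versions of the
   weakly decreasing n-tuples with entries in {0..n} summing to n
   (a partition of n has at most n parts, each at most n). *)
Definition partitions (n : nat) : seq (seq nat) :=
  [seq [seq x <- map val (tval s) | (0 < x)%N]
  | s : n.-tuple 'I_n.+1 <- enum [pred s : n.-tuple 'I_n.+1 |
        sorted geq (map val (tval s)) && (sumn (map val (tval s)) == n)]].

Definition psize (la : seq nat) : nat := sumn la.
Definition plength (la : seq nat) : nat := size la.
Definition nstat (la : seq nat) : nat := (\sum_(i < size la) i * nth 0 la i)%N.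
Definition mult (j : nat) (la : seq nat) : nat := count_mem j la.

Definition qpoch (R : ringType) (x t : R) (m : nat) : R :=
  \prod_(i < m) (1 - x * t ^+ i).

(* Main.v *)
Require Import Defs.
From HB Require Import structures.
From mathcomp Require Import all_boot all_order all_algebra.
From mathcomp Require Import zify ring.
Import GRing.Theory.
Set Implicit Arguments. Unset Strict Implicit. Unset Printing Implicit Defensive.

Lemma geq_trans' : transitive geq.
Proof. move=> a b c /= h1 h2; exact: leq_trans h2 h1. Qed.

Lemma mem_le_sumn (s : seq nat) x : x \in s -> x <= sumn s.
Proof.
elim: s => //= y s IH; rewrite in_cons => /orP[/eqP->|/IH h]; first exact: leq_addr.
exact: leq_trans h (leq_addl _ _).
Qed.

Lemma size_le_sumn (s : seq nat) : all (fun x => 0 < x) s -> size s <= sumn s.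
Proof. elim: s => //= x s IH /andP[hx /IH]; lia. Qed.

Lemma sumn_filter_pos (s : seq nat) : sumn [seq x <- s | 0 < x] = sumn s.
Proof. by elim: s => //= x s IH; case: x => //= x; rewrite IH. Qed.

Lemma decomp (c : nat) (s : seq nat) : sorted geq s -> all (fun x => c <= x) s ->
  s = [seq x <- s | c < x] ++ nseq (count_mem c s) c.
Proof.
elim: s => //= x s IH hp /andP[hx ha].
have hs := path_sorted hp.
have hm := order_path_min geq_trans' hp.
rewrite {1}(IH hs ha).
have [hcx|e] : c < x \/ c = x by lia.
  2: subst x.
  rewrite hcx /=. have -> : (x == c) = false by apply/eqP; lia. by [].
have -> : [seq x <- s | c < x] = [::].
  rewrite (@eq_in_filter _ _ pred0) ?filter_pred0 // => y hy.
  move/allP: hm => /(_ _ hy) /=; lia.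
by rewrite ltnn eqxx.
Qed.

Lemma sorted_cat_geq (s1 s2 : seq nat) c : sorted geq s1 -> sorted geq s2 ->
  all (fun x => c <= x) s1 -> all (fun x => x <= c) s2 -> sorted geq (s1 ++ s2).
Proof.
case: s1 => [|x s1] h1 h2 ha hb //=.
rewrite cat_path; move: h1 => /= ->  /=.
case: s2 h2 hb => [|y s2] h2 hb //=.
move: h2 => /= -> ; rewrite andbT.
move/allP: ha => /(_ _ (mem_last x s1)) h.
move: hb => /andP[hy _]; exact: leq_trans hy h.
Qed.

Lemma mem_partitions n la :
  (la \in partitions n) = is_partition la && (sumn la == n).
Proof.
apply/mapP/idP.
  case=> s; rewrite mem_enum => /andP[srt /eqP sm] ->.
  rewrite /is_partition filter_all sumn_filter_pos sm eqxx !andbT.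
  by apply: sorted_filter => //; exact: geq_trans'.
move=> /andP[/andP[srt pos] /eqP sm].
have hsz : size la <= n by rewrite -sm; exact: size_le_sumn.
set l0 := la ++ nseq (n - size la) 0.
have hl0 : all (fun x => x < n.+1) l0.
  rewrite all_cat; apply/andP; split.
    apply/allP => x hx; rewrite ltnS -sm; exact: mem_le_sumn.
  by apply/allP => x /nseqP[-> _].
have szl0 : size (map (@inord n) l0) == n.
  rewrite size_map size_cat size_nseq; by rewrite subnKC.
have hval : map val (map (@inord n) l0) = l0.
  rewrite -map_comp -[RHS]map_id; apply/eq_in_map => x hx /=.
  by rewrite inordK //; move/allP: hl0; apply.
exists (Tuple szl0).
  rewrite mem_enum inE /= hval sumn_cat sumn_nseq mul0n addn0 sm eqxx andbT.
  apply: (@sorted_cat_geq _ _ 1) => //.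
  - by case: (n - size la) => //= k; elim: k => //= k ->; rewrite andbT.
  - by apply/allP => x /nseqP[-> _].
rewrite /= hval filter_cat (@eq_in_filter _ _ predT) ?filter_predT; last first.
  by move=> x hx; move/allP: pos; apply.
rewrite (@eq_in_filter _ _ pred0) ?filter_pred0 ?cats0 //.
by move=> x /nseqP[-> _].
Qed.

Lemma uniq_partitions n : uniq (partitions n).
Proof.
rewrite map_inj_in_uniq ?enum_uniq // => s1 s2.
rewrite !mem_enum => /andP[srt1 _] /andP[srt2 _] eqf.
apply: val_inj; apply: (inj_map val_inj).
have h0 : forall s : seq nat, all (fun x => 0 <= x) s by move=> s; apply/allP.
rewrite (decomp srt1 (h0 _)) (decomp srt2 (h0 _)) eqf.
congr (_ ++ nseq _ _).
have := decomp srt1 (h0 _); have := decomp srt2 (h0 _).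
move=> e2 e1.
have : size (map val (tval s1)) = size (map val (tval s2)) by rewrite !size_map !size_tuple.
rewrite {1}e1 {1}e2 !size_cat !size_nseq eqf; lia.
Qed.

Lemma sumn_nth (s : seq nat) : \sum_(i < size s) nth 0 s i = sumn s.
Proof. by elim: s => [|x s IH]; rewrite ?big_ord0 // big_ord_recl /= IH. Qed.

Lemma nstat_cons x s : nstat (x :: s) = sumn s + nstat s.
Proof.
rewrite /nstat /= big_ord_recl mul0n add0n -sumn_nth -big_split /=.
by apply: eq_bigr => i _; rewrite mulSn.
Qed.

Lemma nstat_nil : nstat [::] = 0.
Proof. by rewrite /nstat big_ord0. Qed.

Lemma binS2 k : 'C(k.+1, 2) = 'C(k, 2) + k.
Proof. by rewrite binS bin1. Qed.

Lemma nstat_ge (s : seq nat) : all (fun x => 0 < x) s -> 'C(size s, 2) <= nstat s.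
Proof.
elim: s => [|x s IH] /=; first by rewrite nstat_nil.
move=> /andP[_ h]; rewrite nstat_cons binS2.
have := size_le_sumn h; have := IH h; lia.
Qed.

Definition g (k : nat) (nu : seq nat) := map succn nu ++ nseq k 1.

Lemma size_g k nu : size (g k nu) = size nu + k.
Proof. by rewrite /g size_cat size_map size_nseq. Qed.

Lemma sumn_g k nu : sumn (g k nu) = sumn nu + size nu + k.
Proof.
rewrite /g sumn_cat sumn_nseq mul1n; congr (_ + _).
by elim: nu => //= x nu ->; rewrite addSn addnS addnA.
Qed.

Lemma nstat_g k nu : nstat (g k nu) = nstat nu + 'C(size nu + k, 2).
Proof.
elim: nu => [|x nu IH].
  rewrite nstat_nil /g /=; elim: k => [|k IH]; first by rewrite nstat_nil.
  by rewrite /= nstat_cons IH sumn_nseq mul1n binS2 addnC.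
change (nstat (x.+1 :: g k nu) = nstat (x :: nu) + 'C((size nu).+1 + k, 2)).
rewrite !nstat_cons IH sumn_g addSn binS2; lia.
Qed.

Lemma count1_g k nu : all (fun x => 0 < x) nu -> count_mem 1 (g k nu) = k.
Proof.
move=> h; rewrite /g count_cat count_nseq /= mul1n.
suff -> : count_mem 1 (map succn nu) = 0 by [].
by elim: nu h => //= x nu IH /andP[hx /IH ->]; case: x hx.
Qed.

Lemma countS_g k nu i : count_mem i.+2 (g k nu) = count_mem i.+1 nu.
Proof.
rewrite /g count_cat count_nseq /= mul0n addn0.
by elim: nu => //= x nu ->.
Qed.

Lemma ispart_g k nu : is_partition nu -> is_partition (g k nu).
Proof.
move=> /andP[srt pos]; apply/andP; split.
  apply: (@sorted_cat_geq _ _ 1).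
  - rewrite sorted_map; apply: sub_sorted srt => a b /=; lia.
  - by case: k => //= k; elim: k => //= k ->; rewrite andbT.
  - rewrite all_map; apply: sub_all pos => x /=; lia.
  - by apply/allP => x /nseqP[-> _].
rewrite all_cat all_map; apply/andP; split; first by apply/allP.
by apply/allP => x /nseqP[-> _].
Qed.

Definition ginv (la : seq nat) := map predn [seq x <- la | 1 < x].

Lemma decomp_g la : is_partition la -> la = g (count_mem 1 la) (ginv la).
Proof.
move=> /andP[srt pos]; rewrite {1}(decomp srt pos) /g /ginv -map_comp.
congr (_ ++ _); rewrite -[LHS]map_id; apply/eq_in_map => x.
by rewrite mem_filter /= => /andP[h _]; case: x h.
Qed.

Lemma ispart_ginv la : is_partition la -> is_partition (ginv la).
Proof.
move=> /andP[srt pos]; apply/andP; split.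
  rewrite sorted_map; apply: (@sub_sorted _ geq).
    move=> a b /=; lia.
  by apply: sorted_filter => //; exact: geq_trans'.
rewrite all_map; apply/allP => x; rewrite mem_filter /= => /andP[h _]; lia.
Qed.

Lemma g_inj k : injective (g k).
Proof.
move=> a b e.
have hs : size a = size b by move: (congr1 size e); rewrite !size_g; lia.
move: e => /eqP; rewrite /g eqseq_cat ?size_map // => /andP[/eqP e _].
exact: (inj_map succn_inj).
Qed.

Lemma mem_bij n l k : k <= l <= n ->
  [seq la <- partitions n | (size la == l) && (count_mem 1 la == k)] =i
  map (g k) [seq nu <- partitions (n - l) | size nu == l - k].
Proof.
move=> /andP[hkl hln] la; rewrite mem_filter mem_partitions.
apply/idP/mapP.
  move=> /andP[/andP[/eqP hs /eqP hc] /andP[hp /eqP hsum]].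
  exists (ginv la); last by rewrite -hc; exact: decomp_g.
  have e := decomp_g hp; rewrite hc in e.
  rewrite mem_filter mem_partitions ispart_ginv //=.
  have hs' : size (ginv la) + k = l by rewrite -hs {2}e size_g.
  have hsum' : sumn (ginv la) + size (ginv la) + k = n by rewrite -hsum {3}e sumn_g.
  apply/andP; split; apply/eqP; lia.
case=> nu; rewrite mem_filter mem_partitions => /andP[/eqP hs /andP[hp /eqP hsum]] ->.
rewrite ispart_g //= size_g sumn_g count1_g; last by case/andP: hp.
rewrite hs hsum eqxx /= !andbT; apply/andP; split; apply/eqP; lia.
Qed.

Local Open Scope ring_scope.

Section Alg.
Variable K : fieldType.
Variable t : K.

Fixpoint qbin (n k : nat) : K :=
  match n, k with
  | _, 0 => 1
  | 0, _.+1 => 0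
  | n'.+1, k'.+1 => qbin n' k' + t ^+ k'.+1 * qbin n' k'.+1
  end.

Arguments qbin : simpl never.

Lemma qbin0 n : qbin n 0 = 1. Proof. by case: n. Qed.
Lemma qbinSS n k : qbin n.+1 k.+1 = qbin n k + t ^+ k.+1 * qbin n k.+1.
Proof. reflexivity. Qed.

Lemma qbin_gt n k : (n < k)%N -> qbin n k = 0.
Proof.
elim: n k => [|n IH] [|k] //= hk.
by rewrite qbinSS !IH ?mulr0 ?addr0 // ltnW.
Qed.

Lemma qbin_nn n : qbin n n = 1.
Proof. by elim: n => [|n IH]; rewrite ?qbin0 // qbinSS IH qbin_gt // mulr0 addr0. Qed.

Lemma qpochS (x : K) m : qpoch x t m.+1 = qpoch x t m * (1 - x * t ^+ m).
Proof. by rewrite /qpoch big_ord_recr. Qed.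

Lemma qpochtS m : qpoch t t m.+1 = qpoch t t m * (1 - t ^+ m.+1).
Proof. by rewrite qpochS exprS. Qed.

Lemma qpoch0 (x : K) : qpoch x t 0 = 1.
Proof. by rewrite /qpoch big_ord0. Qed.

Lemma qbin_qpoch n k : (k <= n)%N ->
  qbin n k * qpoch t t k * qpoch t t (n - k) = qpoch t t n.
Proof.
elim: n k => [|n IH] [|k] //= hk.
- by rewrite qbin0 /qpoch !big_ord0 !mulr1.
- by rewrite qbin0 subn0 /qpoch big_ord0 !mul1r.
rewrite qbinSS subSS; have [hlt|heq] : (k < n)%N \/ k = n by lia.
  have E1 := IH k (ltnW hlt); have E2 := IH k.+1 hlt.
  have hnk : (n - k = (n - k.+1).+1)%N by lia.
  rewrite hnk in E1 *.
  rewrite !qpochtS in E1 E2 *.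
  set a := qbin n k in E1 *; set b := qbin n k.+1 in E2 *.
  set qk := qpoch t t k in E1 E2 *; set qj := qpoch t t (n - k.+1) in E1 E2 *.
  have -> : (a + t ^+ k.+1 * b) * (qk * (1 - t ^+ k.+1)) * (qj * (1 - t ^+ (n - k.+1).+1))
    = (a * qk * (qj * (1 - t ^+ (n - k.+1).+1))) * (1 - t ^+ k.+1)
      + t ^+ k.+1 * (b * (qk * (1 - t ^+ k.+1)) * qj) * (1 - t ^+ (n - k.+1).+1) by ring.
  rewrite E1 E2.
  have -> : t ^+ n.+1 = t ^+ k.+1 * t ^+ (n - k.+1).+1 by rewrite -exprD; congr (_ ^+ _); lia.
  ring.
subst k; rewrite subnn (@qbin_gt n n.+1) // mulr0 addr0 qpochtS qpoch0 mulr1.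
by rewrite qbin_nn mul1r.
Qed.

Definition P (u : K) (l : nat) := \prod_(i < l) (u - t ^+ i).

Lemma qbin_expand (u : K) n : u ^+ n = \sum_(l < n.+1) qbin n l * P u l.
Proof.
elim: n => [|n IH]; first by rewrite big_ord1 /P big_ord0 qbin0 mulr1 expr0.
rewrite exprS IH mulr_sumr.
have hP : forall l, u * P u l = P u l.+1 + t ^+ l * P u l.
  by move=> l; rewrite /P big_ord_recr /=; ring.
under eq_bigr do rewrite mulrCA hP mulrDr.
rewrite big_split [RHS]big_ord_recl qbin0.
under [X in _ = _ + X]eq_bigr do rewrite lift0 qbinSS mulrDl.
rewrite big_split addrCA; congr (_ + _).
rewrite [X in _ = _ + X](big_ord_recr n) /= (@qbin_gt n n.+1) // mulr0 mul0r addr0.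
rewrite big_ord_recl expr0 mul1r qbin0; congr (_ + _).
  by rewrite mul1r.
by apply: eq_bigr => i _; rewrite lift0 mulrCA mulrA.
Qed.

Lemma vandermonde a b c :
  qbin (a + b) c = \sum_(j < c.+1) qbin a j * qbin b (c - j) * t ^+ ((a - j) * (c - j)).
Proof.
elim: a c => [|a IH] c.
  rewrite big_ord_recl /= qbin0 subn0 mul0n expr0 mulr1 mul1r big1 ?addr0 //.
  by move=> i _; rewrite /= mul0r mul0r.
case: c => [|c]; first by rewrite big_ord1 /= !qbin0 muln0 expr0 !mulr1.
rewrite addSn qbinSS !IH [RHS]big_ord_recl /= qbin0 mul1r !subn0.
under [X in _ = _ + X]eq_bigr do rewrite ?lift0 /bump /= ?add1n qbinSS !subSS mulrDl mulrDl.
rewrite big_split /= addrCA; congr (_ + _).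
rewrite mulr_sumr big_ord_recl /= qbin0 !subn0 mul1r; congr (_ + _).
  by rewrite mulrCA -exprD; congr (_ * _ ^+ _); lia.
apply: eq_bigr => i _; rewrite ?lift0 /bump /= ?add1n !subSS.
have [hi|hi] := leqP i.+1 a; last first.
  by rewrite (@qbin_gt a i.+1) // !(mulr0, mul0r).
have hic : (i < c.+1)%N := ltn_ord i.
have -> : t ^+ ((a - i) * (c - i)) = t ^+ (c - i) * t ^+ ((a - i.+1) * (c - i)).
  rewrite -exprD; congr (_ ^+ _).
  set A := (a - i.+1)%N; have hA : (a - i = A.+1)%N by rewrite /A; lia.
  rewrite hA mulSn //.
have -> : t ^+ c.+1 = t ^+ i.+1 * t ^+ (c - i) by rewrite -exprD; congr (_ ^+ _); lia.
ring.
Qed.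

End Alg.

Arguments qbin : simpl never.

Lemma big_split_by (K : fieldType) (s : seq (seq nat)) (F : seq nat -> K)
  (f : seq nat -> nat) M :
  (forall la, la \in s -> (f la < M)%N) ->
  \sum_(la <- s) F la = \sum_(k < M) \sum_(la <- s | f la == k) F la.
Proof.
move=> hM.
transitivity (\sum_(la <- s) \sum_(k < M | k == f la :> nat) F la).
  rewrite big_seq [RHS]big_seq; apply: eq_bigr => la hla.
  by rewrite (big_ord1_eq _ (fun=> F la) (f la) M) hM.
under eq_bigr do rewrite big_mkcond.
rewrite exchange_big; apply: eq_bigr => k _; rewrite [RHS]big_mkcond.
by apply: eq_bigr => la _; rewrite eq_sym.
Qed.

Lemma big_uniq_eq (K : fieldType) (s1 s2 : seq (seq nat)) (F : seq nat -> K) :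
  uniq s1 -> uniq s2 -> s1 =i s2 -> \sum_(x <- s1) F x = \sum_(x <- s2) F x.
Proof. by move=> u1 u2 e; apply: perm_big; apply: uniq_perm. Qed.

Section Main.
Variable K : fieldType.
Variable t : K.
Variable N : nat.
Hypothesis ht : forall k : nat, (1 <= k <= N)%N -> t ^+ k != 1.

Lemma qpoch_neq0 m : (m <= N)%N -> qpoch t t m != 0.
Proof.
move=> hm; rewrite /qpoch prodf_seq_neq0; apply/allP => i hi /=.
rewrite -exprS subr_eq0 eq_sym ht //; have := ltn_ord i; lia.
Qed.

Definition D (M : nat) (la : seq nat) := \prod_(1 <= i < M) qpoch t t (mult i la).

Lemma D_neq0 M la : (size la <= N)%N -> D M la != 0.
Proof.
move=> hs; rewrite /D prodf_seq_neq0; apply/allP => i _ /=.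
apply: qpoch_neq0; apply: leq_trans hs; exact: count_size.
Qed.

Lemma D_ext M M' la : (1 <= M <= M')%N -> all (fun x => x < M)%N la -> D M' la = D M la.
Proof.
move=> /andP[h1 h2] ha; rewrite /D (big_cat_nat h1 h2) /=.
rewrite [X in _ * X]big_nat_cond [X in _ * X]big1 ?mulr1 // => i /andP[/andP[hi _] _].
rewrite /mult; have /count_memPn -> : i \notin la.
  apply/negP => /(allP ha) /=; lia.
by rewrite qpoch0.
Qed.

Lemma D_g M k nu : (1 <= M)%N -> all (fun x => 0 < x)%N nu ->
  D M.+1 (g k nu) = qpoch t t k * D M nu.
Proof.
move=> hM hp; rewrite /D big_nat_recl // /mult count1_g //; congr (_ * _).
apply: eq_big_nat => i /andP[hi _]; case: i hi => // i _.
by rewrite countS_g.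
Qed.

Definition W (la : seq nat) :=
  t ^+ (2 * nstat la - 2 * 'C(size la, 2)) * (qpoch t t (size la) / D (sumn la).+1 la).

Definition Cs (l n : nat) := \sum_(la <- partitions n | size la == l) W la.

Lemma ratio_helper (a b c d : K) : c != 0 -> a / (b * d) = a / (b * c) * (c / d).
Proof.
move=> hc; rewrite !invfM.
have e : c^-1 * c = 1 by rewrite mulVf.
transitivity (a * b^-1 * (c^-1 * c) * d^-1); first by rewrite e mulr1; ring.
ring.
Qed.

Lemma W_g k nu : is_partition nu -> (1 <= size nu + k <= N)%N ->
  W (g k nu) = qpoch t t (size nu + k) / (qpoch t t k * qpoch t t (size nu))
               * t ^+ (2 * 'C(size nu, 2)) * W nu.
Proof.
move=> hp /andP[h1 h2]; have /andP[_ pos] := hp.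
rewrite /W size_g sumn_g nstat_g.
set S := (sumn nu + size nu + k)%N.
rewrite -(@D_ext S.+1 S.+2 (g k nu)); last first.
  - apply/allP => x hx; rewrite ltnS /S -sumn_g; exact: mem_le_sumn.
  - lia.
rewrite D_g //.
rewrite (@D_ext (sumn nu).+1); last first.
  - apply/allP => x hx; rewrite ltnS; exact: mem_le_sumn.
  - lia.
have hge := nstat_ge pos.
have -> : (2 * (nstat nu + 'C(size nu + k, 2)) - 2 * 'C(size nu + k, 2) =
           2 * 'C(size nu, 2) + (2 * nstat nu - 2 * 'C(size nu, 2)))%N by lia.
rewrite exprD (@ratio_helper _ _ (qpoch t t (size nu))); last first.
  apply: qpoch_neq0; lia.
ring.
Qed.

Lemma Crec l n : (1 <= l <= n)%N -> (n <= N)%N ->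
  Cs l n = \sum_(k < l.+1) qpoch t t l / (qpoch t t k * qpoch t t (l - k))
             * t ^+ (2 * 'C(l - k, 2)) * Cs (l - k) (n - l).
Proof.
move=> /andP[h1 h2] hN.
rewrite /Cs -big_filter (@big_split_by _ _ _ (fun la => count_mem 1 la) l.+1); last first.
  move=> la; rewrite mem_filter => /andP[/eqP <- _]; rewrite ltnS; exact: count_size.
apply: eq_bigr => k _.
have hk : (k <= l)%N by rewrite -ltnS.
rewrite big_filter_cond -big_filter.
rewrite (@big_uniq_eq _ _ (map (g k) [seq nu <- partitions (n - l) | size nu == (l - k)%N])); last first.
  - apply: mem_bij; rewrite hk h2 //.
  - rewrite map_inj_uniq ?filter_uniq ?uniq_partitions //; exact: g_inj.
  - by rewrite filter_uniq ?uniq_partitions.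
rewrite big_map big_filter mulr_sumr big_seq_cond [RHS]big_seq_cond.
apply: eq_bigr => nu /andP[hnu /eqP hs].
have hp : is_partition nu by move: hnu; rewrite mem_partitions => /andP[].
rewrite W_g //; last by rewrite hs; lia.
by rewrite hs subnK.
Qed.

Definition cc (l n : nat) : K :=
  if l == 0%N then (n == 0%N)%:R else if n == 0%N then 0 else qbin t n.-1 l.-1.

Lemma W_nil : W [::] = 1.
Proof. by rewrite /W nstat_nil /= /D big_geq // qpoch0 divr1 mulr1. Qed.

Lemma Cs0 n : Cs 0 n = (n == 0%N)%:R.
Proof.
rewrite /Cs; case: eqP => [->|hn].
  rewrite -big_filter (@big_uniq_eq _ _ [:: [::]]); first by rewrite big_seq1 W_nil.
  all: try by rewrite filter_uniq ?uniq_partitions.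
  - reflexivity.
  by move=> la; rewrite mem_filter mem_partitions inE; case: la.
rewrite big1_seq // => la /andP[/eqP hs hin]; move: hin; rewrite mem_partitions.
case: la hs => // _ /andP[_ /eqP h]; exfalso; exact: hn (esym h).
Qed.

Lemma Cs_gt l n : (n < l)%N -> Cs l n = 0.
Proof.
move=> hl; rewrite /Cs big1_seq // => la /andP[/eqP hs]; rewrite mem_partitions.
move=> /andP[/andP[_ pos] /eqP hsum]; have := size_le_sumn pos; lia.
Qed.

Lemma mul2bin2 j : (2 * 'C(j, 2) = j * (j - 1))%N.
Proof. elim: j => // j IH; rewrite binS2 mulnDr IH; nia. Qed.

Lemma ratio_qbin l k : (k <= l)%N -> (l <= N)%N ->
  qpoch t t l / (qpoch t t k * qpoch t t (l - k)) = qbin t l k.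
Proof.
move=> hk hl; rewrite -(qbin_qpoch t hk).
have h1 : qpoch t t k != 0 by apply: qpoch_neq0; lia.
have h2 : qpoch t t (l - k) != 0 by apply: qpoch_neq0; lia.
by field; rewrite h1 h2.
Qed.

Lemma cc_rec l n : (1 <= l <= n)%N -> (n <= N)%N ->
  cc l n = \sum_(k < l.+1) qpoch t t l / (qpoch t t k * qpoch t t (l - k))
             * t ^+ (2 * 'C(l - k, 2)) * cc (l - k) (n - l).
Proof.
move=> /andP[h1 h2] hN.
rewrite (eq_bigr (fun k : 'I_l.+1 =>
   qbin t l k * t ^+ ((l - k) * (l - k - 1)) * cc (l - k) (n - l))); last first.
  move=> k _; have hk : (k <= l)%N by rewrite -ltnS.
  rewrite ratio_qbin // ?mul2bin2 //; lia.
rewrite big_ord_recr /= subnn qbin_nn /cc /= mul1r.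
have -> : (l == 0%N) = false by apply/negbTE; rewrite -lt0n.
have -> : (n == 0%N) = false by apply/negbTE; rewrite -lt0n; lia.
case: eqP => hm.
  have hnl : n = l by lia.
  rewrite hnl qbin_nn mulr1 big1 ?add0r // => k _.
  have -> : (l - k == 0)%N = false by apply/negbTE; rewrite subn_eq0 -ltnNge.
  by rewrite mulr0.
rewrite mulr0 addr0.
have := vandermonde t l (n - l).-1 l.-1.
have -> : (l + (n - l).-1 = n.-1)%N by lia.
move=> ->; case: l h1 h2 hm => // l _ h2 hm /=.
apply: eq_bigr => k _.
have hk : (k < l.+1)%N := ltn_ord k.
have -> : (l.+1 - k == 0)%N = false by apply/negbTE; rewrite subn_eq0 -ltnNge.
rewrite -mulrA [qbin t (n - l.+1).-1 _ * _]mulrC mulrA; congr (_ * _ ^+ _ * qbin t _ _); lia.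
Qed.

Lemma Cs_cc n : (n <= N)%N -> forall l, Cs l n = cc l n.
Proof.
elim/ltn_ind: n => n IH hN l.
case: (posnP l) => [->|hl]; first by rewrite Cs0 /cc.
case: (leqP l n) => hln; last first.
  rewrite Cs_gt // /cc; case: l hl hln => // l _ hln /=.
  by case: n hln IH hN => //= n hln _ _; rewrite qbin_gt.
rewrite Crec ?hl ?hln // cc_rec ?hl ?hln //; apply: eq_bigr => k _.
by rewrite IH //; lia.
Qed.

End Main.

Lemma qpoch_u (K : fieldType) (t u : K) l : u != 0 ->
  qpoch u^-1 t l * u ^+ l = P t u l.
Proof.
move=> hu; elim: l => [|l IH]; first by rewrite qpoch0 /P big_ord0 mulr1.
rewrite qpochS /P big_ord_recr /= -/(P t u l) -IH exprS.
have e : u^-1 * u = 1 by rewrite mulVf.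
transitivity (qpoch u^-1 t l * u ^+ l * (u - (u^-1 * u) * t ^+ l)); first ring.
by rewrite e mul1r.
Qed.

Unset Implicit Arguments.

Theorem mainTheorem10 (K : fieldType) (t u : K) (n : nat) :
  (1 <= n)%N -> u != 0 -> (forall k : nat, (1 <= k <= n)%N -> t ^+ k != 1) ->
  \sum_(la <- partitions n)
     t ^+ (2 * nstat la - 2 * 'C(plength la, 2))%N
     * (qpoch t t (plength la).-1 * qpoch u^-1 t (plength la)
        / \prod_(1 <= i < (psize la).+1) qpoch t t (mult i la))
     * u ^+ plength la
  = (u ^+ n - 1) / (1 - t ^+ n).
Proof.
move=> hn hu ht.
pose Ef l := qpoch t t l.-1 * qpoch u^-1 t l * u ^+ l / qpoch t t l.
rewrite (eq_big_seq (fun la => Ef (size la) * W t la)); last first.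
  move=> la; rewrite mem_partitions => /andP[/andP[_ pos] /eqP hs].
  have hsz : (size la <= n)%N by rewrite -hs; exact: size_le_sumn.
  have hq : qpoch t t (size la) != 0 by apply: (qpoch_neq0 ht).
  rewrite /Ef /W /D /plength /psize; field; rewrite hq andbT; exact: (D_neq0 ht _ hsz).
rewrite (@big_split_by _ _ _ size n.+1); last first.
  move=> la; rewrite mem_partitions => /andP[/andP[_ pos] /eqP hs].
  by rewrite ltnS -hs; exact: size_le_sumn.
rewrite (eq_bigr (fun l : 'I_n.+1 => Ef l * cc t l n)); last first.
  move=> l _; rewrite -(Cs_cc ht) // /Cs mulr_sumr.
  by apply: eq_bigr => la /eqP ->.
rewrite big_ord_recl.
have -> : cc t ord0 n = 0 by rewrite /cc /=; case: (n) hn.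
rewrite mulr0 add0r.
rewrite (qbin_expand t u n) big_ord_recl qbin0.
have -> : P t u ord0 = 1 by rewrite /P /= big_ord0.
rewrite mul1r [1 + _]addrC addrK mulr_suml; apply: eq_bigr => i _.
rewrite lift0 /Ef /cc /=.
have -> : (n == 0%N) = false by case: (n) hn.
have hi : (i < n)%N := ltn_ord i.
rewrite -(qpoch_u t i.+1 hu).
rewrite -(ratio_qbin ht) ?leq_pred //; last by lia.
rewrite -(ratio_qbin ht) //.
have -> : qpoch t t n = qpoch t t n.-1 * (1 - t ^+ n).
  by move: hn; case: (n) => // m _; rewrite qpochtS.
have -> : (n - i.+1 = n.-1 - i)%N by lia.
have h1 : qpoch t t i != 0 by apply: (qpoch_neq0 ht); lia.
have h2 : qpoch t t i.+1 != 0 by apply: (qpoch_neq0 ht); lia.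
have h3 : qpoch t t (n.-1 - i) != 0 by apply: (qpoch_neq0 ht); lia.
have h4 : 1 - t ^+ n != 0 by rewrite subr_eq0 eq_sym ht // hn leqnn.
field.
by rewrite h1 h2 h3 h4.
Qed.
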